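(* Let $F:\mathcal{C}\to\mathcal{D}$ be a Frobenius functor, and let $G:\mathcal{D}\to\mathcal{C}$ be both a left and a right adjoint of $F$. Let $\eta:1_{\mathcal{C}}\to GF$ be the unit of the adjunction in which $F$ is left adjoint to $G$, and $\mu:GF\to 1_{\mathcal{C}}$ the counit of the adjunction in which $G$ is left adjoint to $F$. The following are equivalent: (1) $F$ is naturally full; (2) there exists a natural transformation $\alpha:G\to G$ with $\eta_C\circ\mu_C\circ\alpha_{FC}=\mathrm{id}_{GFC}$ for all $C\in\mathcal{C}$; (3) there exists a natural transformation $\beta:F\to F$ with $\eta_C\circ\mu_C\circ G(\beta_C)=\mathrm{id}_{GFC}$ for all $C\in\mathcal{C}$; (4) there exists a natural transformation $\tilde\alpha:G\to G$ with $\tilde\alpha_{FC}\circ\eta_C\circ\mu_C=\mathrm{id}_{GFC}$ for all $C\in\mathcal{C}$; (5) there exists a natural transformation $\tilde\beta:F\to F$ with $G(\tilde\beta_C)\circ\eta_C\circ\mu_C=\mathrm{id}_{GFC}$ for all $C\in\mathcal{C}$. In this case $\eta_C\circ\mu_C$ is an isomorphism in $\mathcal{C}$ and (for $\alpha,\beta,\tilde\alpha,\tilde\beta$ as in (2)–(5)) $\alpha_{FC}=\tilde\alpha_{FC}=G(\beta_C)=G(\tilde\beta_C)$.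
   Context: A functor is Frobenius if it has a right adjoint which is also a left adjoint. For a functor $F:\mathcal{A}\to\mathcal{B}$, let $\mathcal{F}:\mathrm{Hom}_{\mathcal{A}}(\bullet,\bullet)\to\mathrm{Hom}_{\mathcal{B}}(F(\bullet),F(\bullet))$, $\mathcal{F}_{A,A'}(f)=F(f)$. $F$ is called naturally full if there is a natural transformation $\mathcal{P}:\mathrm{Hom}_{\mathcal{B}}(F(\bullet),F(\bullet))\to\mathrm{Hom}_{\mathcal{A}}(\bullet,\bullet)$ (natural in both variables) such that $F(\mathcal{P}_{A,A'}(u))=u$ for all $u:F(A)\to F(A')$. *)

(* Defs.v *)
Set Implicit Arguments.
Unset Strict Implicit.

Record Category := {
  ob :> Type;
  hom : ob -> ob -> Type;
  idm : forall a, hom a a;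
  comp : forall a b c, hom b c -> hom a b -> hom a c;
  comp_id_l : forall a b (f : hom a b), comp (idm b) f = f;
  comp_id_r : forall a b (f : hom a b), comp f (idm a) = f;
  comp_assoc : forall a b c d (h : hom c d) (g : hom b c) (f : hom a b),
      comp h (comp g f) = comp (comp h g) f
}.

Arguments hom {C} a b : rename.
Arguments idm {C} a : rename.
Arguments comp {C a b c} g f : rename.

Declare Scope cat_scope.
Notation "g ∘ f" := (comp g f) (at level 40, left associativity) : cat_scope.
Open Scope cat_scope.

Record Functor (C D : Category) := {
  fobj :> C -> D;
  fmap : forall a b, hom a b -> hom (fobj a) (fobj b);
  fmap_id : forall a, fmap (idm a) = idm (fobj a);
  fmap_comp : forall a b c (g : hom b c) (f : hom a b),
      fmap (g ∘ f) = fmap g ∘ fmap f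
}.

Arguments fmap {C D} F {a b} f : rename.

Record NatTrans (C D : Category) (F G : Functor C D) := {
  component :> forall a : C, hom (F a) (G a);
  naturality : forall a b (f : hom a b),
      fmap G f ∘ component a = component b ∘ fmap F f
}.

Record Adjunction (C D : Category) (F : Functor C D) (G : Functor D C) := {
  adj_unit : forall c : C, hom c (G (F c));
  adj_counit : forall d : D, hom (F (G d)) d;
  adj_unit_nat : forall a b (f : hom a b),
      fmap G (fmap F f) ∘ adj_unit a = adj_unit b ∘ f;
  adj_counit_nat : forall a b (g : hom a b),
      g ∘ adj_counit a = adj_counit b ∘ fmap F (fmap G g);
  adj_triangle_F : forall c : C, adj_counit (F c) ∘ fmap F (adj_unit c) = idm (F c);
  adj_triangle_G : forall d : D, fmap G (adj_counit d) ∘ adj_unit (G d) = idm (G d)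
}.

Definition Frobenius (C D : Category) (F : Functor C D) : Prop :=
  exists G : Functor D C, inhabited (Adjunction F G) /\ inhabited (Adjunction G F).

Definition is_iso (C : Category) (a b : C) (f : hom a b) : Prop :=
  exists g : hom b a, g ∘ f = idm a /\ f ∘ g = idm b.

Definition naturally_full (C D : Category) (F : Functor C D) : Prop :=
  exists P : forall a a' : C, hom (F a) (F a') -> hom a a',
    (forall a a' (u : hom (F a) (F a')), fmap F (P a a' u) = u) /\
    (forall a0 a1 a2 a3 (f : hom a0 a1) (g : hom a2 a3) (u : hom (F a1) (F a2)),
        P a0 a3 (fmap F g ∘ u ∘ fmap F f) = g ∘ P a1 a2 u ∘ f).

(* Main.v *)
Require Import Defs.

Lemma HNl (C D : Category) (F : Functor C D) (P : forall a a' : C, hom (F a) (F a') -> hom a a') :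
  (forall a0 a1 a2 a3 (f : hom a0 a1) (g : hom a2 a3) (u : hom (F a1) (F a2)),
        P a0 a3 (fmap F g ∘ u ∘ fmap F f) = g ∘ P a1 a2 u ∘ f) ->
  forall a1 a2 a3 (g : hom a2 a3) (u : hom (F a1) (F a2)), P a1 a3 (fmap F g ∘ u) = g ∘ P a1 a2 u.
Proof.
  intros HN a1 a2 a3 g u.
  pose proof (HN a1 a1 a2 a3 (idm a1) g u) as H.
  rewrite fmap_id, !comp_id_r in H. exact H.
Qed.

Lemma HNr (C D : Category) (F : Functor C D) (P : forall a a' : C, hom (F a) (F a') -> hom a a') :
  (forall a0 a1 a2 a3 (f : hom a0 a1) (g : hom a2 a3) (u : hom (F a1) (F a2)),
        P a0 a3 (fmap F g ∘ u ∘ fmap F f) = g ∘ P a1 a2 u ∘ f) ->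
  forall a0 a1 a2 (f : hom a0 a1) (u : hom (F a1) (F a2)), P a0 a2 (u ∘ fmap F f) = P a1 a2 u ∘ f.
Proof.
  intros HN a0 a1 a2 f u.
  pose proof (HN a0 a1 a2 a2 f (idm a2) u) as H.
  rewrite fmap_id, !comp_id_l in H. exact H.
Qed.

Lemma rho_of_nf (C D : Category) (F : Functor C D) (G : Functor D C) (FG : Adjunction F G) :
  naturally_full F -> exists rho : forall c : C, hom (G (F c)) c,
    (forall a b (f : hom a b), f ∘ rho a = rho b ∘ fmap G (fmap F f)) /\
    (forall c, adj_unit FG c ∘ rho c = idm _).
Proof.
  intros [P [HP HN]].
  exists (fun c => P _ _ (adj_counit FG (F c))).
  assert (Hnat : forall a b (f : hom a b), f ∘ P _ _ (adj_counit FG (F a)) = P _ _ (adj_counit FG (F b)) ∘ fmap G (fmap F f)).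
  { intros a b f. rewrite <- (@HNl _ _ F P HN), <- (@HNr _ _ F P HN). f_equal. apply adj_counit_nat. }
  split; [exact Hnat|].
  intros c. rewrite <- adj_unit_nat. rewrite HP. apply adj_triangle_G.
Qed.

Lemma nf_of_rho (C D : Category) (F : Functor C D) (G : Functor D C) (FG : Adjunction F G) :
  (exists rho : forall c : C, hom (G (F c)) c,
    (forall a b (f : hom a b), f ∘ rho a = rho b ∘ fmap G (fmap F f)) /\
    (forall c, adj_unit FG c ∘ rho c = idm _)) -> naturally_full F.
Proof.
  intros [rho [Hn Hs]].
  assert (HF : forall c, fmap F (rho c) = adj_counit FG (F c)).
  { intros c. rewrite <- (comp_id_l (fmap F (rho c))), <- (adj_triangle_F FG c), <- comp_assoc,
    <- fmap_comp, Hs, fmap_id, comp_id_r. reflexivity. }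
  exists (fun a a' u => rho a' ∘ fmap G u ∘ adj_unit FG a). split.
  - intros a a' u. rewrite !fmap_comp, HF, <- adj_counit_nat, <- comp_assoc,
      adj_triangle_F, comp_id_r. reflexivity.
  - intros a0 a1 a2 a3 f g u. rewrite !fmap_comp.
    rewrite <- !comp_assoc, adj_unit_nat, !comp_assoc, Hn. reflexivity.
Qed.

Lemma sigma_of_nf (C D : Category) (F : Functor C D) (G : Functor D C) (GF : Adjunction G F) :
  naturally_full F -> exists sigma : forall c : C, hom c (G (F c)),
    (forall a b (f : hom a b), fmap G (fmap F f) ∘ sigma a = sigma b ∘ f) /\
    (forall c, sigma c ∘ adj_counit GF c = idm _).
Proof.
  intros [P [HP HN]].
  exists (fun c => P _ _ (adj_unit GF (F c))).
  assert (Hnat : forall a b (f : hom a b), fmap G (fmap F f) ∘ P _ _ (adj_unit GF (F a)) = P _ _ (adj_unit GF (F b)) ∘ f).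
  { intros a b f. rewrite <- (@HNl _ _ F P HN), <- (@HNr _ _ F P HN). f_equal. apply adj_unit_nat. }
  split; [exact Hnat|].
  intros c. rewrite adj_counit_nat. rewrite HP. apply adj_triangle_F.
Qed.

Lemma nf_of_sigma (C D : Category) (F : Functor C D) (G : Functor D C) (GF : Adjunction G F) :
  (exists sigma : forall c : C, hom c (G (F c)),
    (forall a b (f : hom a b), fmap G (fmap F f) ∘ sigma a = sigma b ∘ f) /\
    (forall c, sigma c ∘ adj_counit GF c = idm _)) -> naturally_full F.
Proof.
  intros [sigma [Hn Hs]].
  assert (HF : forall c, fmap F (sigma c) = adj_unit GF (F c)).
  { intros c. rewrite <- (comp_id_r (fmap F (sigma c))), <- (adj_triangle_G GF c), comp_assoc,
    <- fmap_comp, Hs, fmap_id, comp_id_l. reflexivity. }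
  exists (fun a a' u => adj_counit GF a' ∘ fmap G u ∘ sigma a). split.
  - intros a a' u. rewrite !fmap_comp, HF, <- comp_assoc, adj_unit_nat, comp_assoc,
      adj_triangle_G, comp_id_l. reflexivity.
  - intros a0 a1 a2 a3 f g u. rewrite !fmap_comp.
    rewrite <- !comp_assoc, Hn, !comp_assoc, adj_counit_nat. reflexivity.
Qed.

Lemma inv_uniq (C : Category) (a b : C) (x : hom a b) (l r : hom b a) :
  l ∘ x = idm a -> x ∘ r = idm b -> l = r.
Proof.
  intros Hl Hr. rewrite <- (comp_id_r l), <- Hr, comp_assoc, Hl, comp_id_l. reflexivity.
Qed.

Theorem proposition2p7 (C D : Category) (F : Functor C D) (G : Functor D C)
  (FG : Adjunction F G) (GF : Adjunction G F) :
  let eta := adj_unit FG in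
  let mu := adj_counit GF in
  (naturally_full F <->
     exists alpha : NatTrans G G, forall c : C,
       eta c ∘ mu c ∘ alpha (F c) = idm (G (F c))) /\
  (naturally_full F <->
     exists beta : NatTrans F F, forall c : C,
       eta c ∘ mu c ∘ fmap G (beta c) = idm (G (F c))) /\
  (naturally_full F <->
     exists alpha' : NatTrans G G, forall c : C,
       alpha' (F c) ∘ eta c ∘ mu c = idm (G (F c))) /\
  (naturally_full F <->
     exists beta' : NatTrans F F, forall c : C,
       fmap G (beta' c) ∘ eta c ∘ mu c = idm (G (F c))) /\
  (naturally_full F ->
     (forall c : C, is_iso (eta c ∘ mu c)) /\
     (forall (alpha alpha' : NatTrans G G) (beta beta' : NatTrans F F),
        (forall c : C, eta c ∘ mu c ∘ alpha (F c) = idm (G (F c))) ->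
        (forall c : C, eta c ∘ mu c ∘ fmap G (beta c) = idm (G (F c))) ->
        (forall c : C, alpha' (F c) ∘ eta c ∘ mu c = idm (G (F c))) ->
        (forall c : C, fmap G (beta' c) ∘ eta c ∘ mu c = idm (G (F c))) ->
        forall c : C,
          alpha (F c) = alpha' (F c) /\
          alpha (F c) = fmap G (beta c) /\
          alpha (F c) = fmap G (beta' c))).
Proof.
  intros eta mu. subst eta mu.
  assert (H2 : naturally_full F <->
     exists alpha : NatTrans G G, forall c : C,
       adj_unit FG c ∘ adj_counit GF c ∘ alpha (F c) = idm (G (F c))).
  { split.
    - intros Hnf. destruct (@rho_of_nf _ _ _ _ FG Hnf) as [rho [Hn Hs]].
      unshelve eexists.
      { exists (fun d => rho (G d) ∘ fmap G (adj_unit GF d)).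
        intros a b g.
        rewrite comp_assoc, Hn, <- comp_assoc, <- fmap_comp, adj_unit_nat, fmap_comp, comp_assoc.
        reflexivity. }
      intros c; simpl.
      rewrite comp_assoc, <- (comp_assoc _ (adj_counit GF c)), Hn, comp_assoc, Hs, comp_id_l,
        <- fmap_comp, adj_triangle_G, fmap_id. reflexivity.
    - intros [alpha Ha]. apply (@nf_of_rho _ _ _ _ FG).
      exists (fun c => adj_counit GF c ∘ alpha (F c)). split.
      + intros a b f. rewrite comp_assoc, adj_counit_nat, <- comp_assoc, naturality, comp_assoc.
        reflexivity.
      + intros c. rewrite comp_assoc. apply Ha. }
  assert (H3 : naturally_full F <->
     exists beta : NatTrans F F, forall c : C,
       adj_unit FG c ∘ adj_counit GF c ∘ fmap G (beta c) = idm (G (F c))).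
  { split.
    - intros Hnf. destruct (@rho_of_nf _ _ _ _ FG Hnf) as [rho [Hn Hs]].
      unshelve eexists.
      { exists (fun c => fmap F (rho c) ∘ adj_unit GF (F c)).
        intros a b f.
        rewrite comp_assoc, <- fmap_comp, Hn, fmap_comp, <- comp_assoc, adj_unit_nat, comp_assoc.
        reflexivity. }
      intros c; simpl.
      rewrite fmap_comp, comp_assoc, <- (comp_assoc _ (adj_counit GF c)), <- adj_counit_nat,
        comp_assoc, Hs, comp_id_l, adj_triangle_F. reflexivity.
    - intros [beta Hb]. apply (@nf_of_rho _ _ _ _ FG).
      exists (fun c => adj_counit GF c ∘ fmap G (beta c)). split.
      + intros a b f. rewrite comp_assoc, adj_counit_nat, <- comp_assoc, <- fmap_comp, naturality,
          fmap_comp, comp_assoc. reflexivity.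
      + intros c. rewrite comp_assoc. apply Hb. }
  assert (H4 : naturally_full F <->
     exists alpha' : NatTrans G G, forall c : C,
       alpha' (F c) ∘ adj_unit FG c ∘ adj_counit GF c = idm (G (F c))).
  { split.
    - intros Hnf. destruct (@sigma_of_nf _ _ _ _ GF Hnf) as [sigma [Hn Hs]].
      unshelve eexists.
      { exists (fun d => fmap G (adj_counit FG d) ∘ sigma (G d)).
        intros a b g.
        rewrite comp_assoc, <- fmap_comp, adj_counit_nat, fmap_comp, <- comp_assoc, Hn, comp_assoc.
        reflexivity. }
      intros c; simpl.
      rewrite <- (comp_assoc _ (sigma _)), <- Hn, comp_assoc, <- (comp_assoc _ (sigma c)), Hs,
        comp_id_r, <- fmap_comp, adj_triangle_F, fmap_id. reflexivity.
    - intros [alpha Ha]. apply (@nf_of_sigma _ _ _ _ GF).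
      exists (fun c => alpha (F c) ∘ adj_unit FG c). split.
      + intros a b f. rewrite comp_assoc, naturality, <- comp_assoc, adj_unit_nat, comp_assoc.
        reflexivity.
      + intros c. apply Ha. }
  assert (H5 : naturally_full F <->
     exists beta' : NatTrans F F, forall c : C,
       fmap G (beta' c) ∘ adj_unit FG c ∘ adj_counit GF c = idm (G (F c))).
  { split.
    - intros Hnf. destruct (@sigma_of_nf _ _ _ _ GF Hnf) as [sigma [Hn Hs]].
      unshelve eexists.
      { exists (fun c => adj_counit FG (F c) ∘ fmap F (sigma c)).
        intros a b f.
        rewrite comp_assoc, adj_counit_nat, <- comp_assoc, <- fmap_comp, Hn, fmap_comp, comp_assoc.
        reflexivity. }
      intros c; simpl.
      rewrite fmap_comp, <- (comp_assoc _ (fmap G (fmap F (sigma c)))), adj_unit_nat,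
        comp_assoc, adj_triangle_G, comp_id_l, Hs. reflexivity.
    - intros [beta Hb]. apply (@nf_of_sigma _ _ _ _ GF).
      exists (fun c => fmap G (beta c) ∘ adj_unit FG c). split.
      + intros a b f. rewrite comp_assoc, <- fmap_comp, naturality, fmap_comp, <- comp_assoc,
          adj_unit_nat, comp_assoc. reflexivity.
      + intros c. apply Hb. }
  split; [exact H2|]. split; [exact H3|]. split; [exact H4|]. split; [exact H5|].
  intros Hnf. split.
  - intros c. destruct (proj1 H2 Hnf) as [alpha Ha]. destruct (proj1 H4 Hnf) as [alpha' Ha'].
    exists (alpha' (F c)). split.
    + rewrite comp_assoc. apply Ha'.
    + rewrite (@inv_uniq _ _ _ (adj_unit FG c ∘ adj_counit GF c) (alpha' (F c)) (alpha (F c))).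
      * apply Ha.
      * rewrite comp_assoc. apply Ha'.
      * apply Ha.
  - intros alpha alpha' beta beta' Ha Hb Ha' Hb' c.
    assert (Ea : alpha' (F c) = alpha (F c)).
    { apply (@inv_uniq _ _ _ (adj_unit FG c ∘ adj_counit GF c)); [rewrite comp_assoc; apply Ha' | apply Ha]. }
    assert (Eb : alpha' (F c) = fmap G (beta c)).
    { apply (@inv_uniq _ _ _ (adj_unit FG c ∘ adj_counit GF c)); [rewrite comp_assoc; apply Ha' | apply Hb]. }
    assert (Eb' : fmap G (beta' c) = alpha (F c)).
    { apply (@inv_uniq _ _ _ (adj_unit FG c ∘ adj_counit GF c)); [rewrite comp_assoc; apply Hb' | apply Ha]. }
    split; [|split]; congruence.
Qed.
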